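(* Let $n\ge2$, $\rho\in\mathbb{C}\setminus\{-1,1\}$, let $z_k$ be a zero of $p_{2n}(\rho,z)$, and let $\lambda_k=\frac{z_k(1-\rho^2)}{(z_k-\rho)(1-\rho z_k)}$ be the corresponding eigenvalue of $K_n(\rho)$. Then $|z_k|=1$ iff $\lambda_k\in\mathrm{range}\{\sigma(\rho,\theta)\}$.
   Context: $K_n(\rho)=\left[\rho^{|j-k|}\right]_{j,k=1}^n$ (with $\rho^0=1$). $p_{2n}(\rho,z)=z^{2n}+(1+\rho^2)\sum_{k=1}^{n-1}z^{2k}-2\rho\sum_{k=0}^{n-1}z^{2k+1}+1$. For $\rho\neq\pm1$ no zero of $p_{2n}(\rho,\cdot)$ equals $\rho$ or $1/\rho$, so $\lambda_k$ is well defined, and it is an eigenvalue of $K_n(\rho)$. $\sigma(\rho,\theta)=\frac{1-\rho^2}{1-2\rho\cos\theta+\rho^2}$, and $\mathrm{range}\{\sigma(\rho,\theta)\}$ denotes the set of values $\sigma(\rho,\theta)$ for real $\theta\in(-\pi,\pi]$ (at which the denominator is nonzero). For $|\rho|<1$ this is the range of the symbol of the Laurent matrix associated with $K_n(\rho)$; for $|\rho|\ge1$ it is the range of the analytic continuation of that formula. *)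

(* Defs.v *)
From HB Require Import structures.
From mathcomp Require Import all_boot all_order all_algebra.
From mathcomp Require Import complex.
From mathcomp Require Import reals trigo.
Set Implicit Arguments. Unset Strict Implicit. Unset Printing Implicit Defensive.
Import Order.TTheory GRing.Theory Num.Theory ComplexField.
Local Open Scope ring_scope.
Local Open Scope complex_scope.

(* K_n(rho) = [rho^{|j-k|}]_{j,k=1..n} (0-indexed here); context only. *)
Definition Kmat (R : rcfType) (n : nat) (rho : R[i]) : 'M[R[i]]_n :=
  \matrix_(j < n, k < n) rho ^+ (if (j <= k)%N then (k - j)%N else (j - k)%N).

Definition p2n (R : rcfType) (n : nat) (rho z : R[i]) : R[i] :=
  z ^+ (2 * n) + (1 + rho ^+ 2) * (\sum_(1 <= k < n) z ^+ (2 * k))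
  - 2 * rho * (\sum_(0 <= k < n) z ^+ (2 * k + 1)) + 1.

Definition lambda_of (R : rcfType) (rho z : R[i]) : R[i] :=
  z * (1 - rho ^+ 2) / ((z - rho) * (1 - rho * z)).

Definition sigma_den (R : realType) (rho : R[i]) (theta : R) : R[i] :=
  1 - 2 * rho * (cos theta)%:C + rho ^+ 2.

Definition sigma (R : realType) (rho : R[i]) (theta : R) : R[i] :=
  (1 - rho ^+ 2) / sigma_den rho theta.

Definition in_sigma_range (R : realType) (rho w : R[i]) : Prop :=
  exists theta : R, [/\ - pi < theta, theta <= pi,
                        sigma_den rho theta != 0 & w = sigma rho theta].

(* Main.v *)
Require Import Defs.
From HB Require Import structures.
From mathcomp Require Import all_boot all_order all_algebra.
From mathcomp Require Import complex.
From mathcomp Require Import reals trigo.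
From mathcomp Require Import ring lra.
Import Order.TTheory GRing.Theory Num.Theory ComplexField.
Local Open Scope ring_scope.
Local Open Scope complex_scope.

Lemma unit_of_quad (R : rcfType) (z : R[i]) (c : R) : -1 <= c <= 1 ->
  z ^+ 2 - 2 * c%:C * z + 1 = 0 -> `|z| = 1.
Proof.
move=> /andP[c1 c2]; case: z => a b H.
have H1 := congr1 (@complex.Re R) H; have H2 := congr1 (@complex.Im R) H.
rewrite /= in H1 H2.
have E : a * a + b * b = 1.
  have : b * (a - c) = 0 by lra.
  move/eqP; rewrite mulf_eq0 => /orP[/eqP hb|]; last by rewrite subr_eq0 => /eqP hac; subst a; lra.
  subst b. have hac : (a - c) ^+ 2 + (1 - c ^+ 2) = 0 by lra.
  have h1 : 0 <= 1 - c ^+ 2 by nra.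
  have h2 : 0 <= (a - c) ^+ 2 by apply: sqr_ge0.
  have h3 : (a - c) ^+ 2 = 0 by lra.
  move: h3; move/eqP; rewrite sqrf_eq0 subr_eq0 => /eqP hac'; subst a. nra.
apply/eqP; rewrite -(sqrp_eq1 (normr_ge0 _)) sqr_normc /= eq_complex /=.
apply/andP; split; apply/eqP; lra.
Qed.
Lemma tele (F : comNzRingType) (z : F) n :
  (1 - z ^+ 2) * \sum_(0 <= k < n) z ^+ (2 * k) = 1 - z ^+ (2 * n).
Proof.
elim: n => [|n IH]; first by rewrite big_geq // mulr0 muln0 expr0 subrr.
rewrite big_nat_recr //= mulrDr IH mulnS exprD; ring.
Qed.

Lemma p2n_id (R : rcfType) n (rho z : R[i]) : (1 <= n)%N ->
  (1 - z ^+ 2) * p2n n rho z = (1 - rho * z) ^+ 2 - z ^+ (2 * n) * (z - rho) ^+ 2.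
Proof.
move=> n1; rewrite /p2n.
have E1 : \sum_(1 <= k < n) z ^+ (2 * k) = \sum_(0 <= k < n) z ^+ (2 * k) - 1.
  by rewrite [in RHS]big_ltn // muln0 expr0 addrC addKr.
have E2 : \sum_(0 <= k < n) z ^+ (2 * k + 1) = z * \sum_(0 <= k < n) z ^+ (2 * k).
  by rewrite big_distrr; apply: eq_bigr => k _; rewrite exprD expr1 mulrC.
rewrite E1 E2.
have := @tele _ z n; set S := \sum_(0 <= k < n) _; set W := z ^+ (2 * n) => T.
have -> : (1 - z ^+ 2) * (W + (1 + rho ^+ 2) * (S - 1) - 2 * rho * (z * S) + 1)
  = (1 - z ^+ 2) * (W + 1) + (1 + rho ^+ 2) * ((1 - z^+2) * S - (1 - z ^+ 2)) - 2 * rho * z * ((1 - z ^+ 2) * S) by ring.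
rewrite T; ring.
Qed.

Lemma unit_fwd (R : rcfType) (z : R[i]) : `|z| = 1 ->
  [/\ -1 <= complex.Re z <= 1 & z ^+ 2 + 1 = 2 * (complex.Re z)%:C * z].
Proof.
case: z => a b /= H.
have : `|a +i* b| ^+ 2 = 1 by rewrite H expr1n.
rewrite sqr_normc /= => /eqP; rewrite eq_complex /= => /andP[/eqP E _].
split; first by apply/andP; split; nra.
apply/eqP; rewrite eq_complex /=; apply/andP; split; apply/eqP; lra.
Qed.

Theorem proposition3p4 (R : realType) (n : nat) (rho z : R[i]) :
  (2 <= n)%N -> rho != 1 -> rho != -1 -> p2n n rho z = 0 ->
  (`|z| = 1 <-> in_sigma_range rho (lambda_of rho z)).
Proof.
move=> n2 r1 r2 hp.
have Id := @p2n_id _ n rho z (ltnW n2).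
rewrite hp mulr0 in Id.
have h1r : 1 - rho ^+ 2 != 0.
  have -> : 1 - rho ^+ 2 = (1 - rho) * (1 + rho) by ring.
  by rewrite mulf_eq0 negb_or subr_eq0 eq_sym r1 /= addrC addr_eq0 r2.
have Id' : (1 - rho * z) ^+ 2 = z ^+ (2 * n) * (z - rho) ^+ 2.
  by apply/eqP; rewrite -subr_eq0 -Id.
have hz0 : z != 0.
  apply/eqP => hz; move: Id'; rewrite hz mulr0 subr0 expr0n /= muln_eq0 /=.
  have -> : (n == 0)%N = false by move: n2; case: (n).
  by rewrite mul0r expr1n => /eqP; rewrite oner_eq0.
have hzr : z != rho.
  apply/eqP => hz; move: Id'; rewrite hz subrr expr0n /= mulr0 -expr2 => /eqP.
  by rewrite sqrf_eq0; apply/negP.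
have hrz : 1 - rho * z != 0.
  apply/eqP => hz; move: Id'; rewrite hz expr0n /= => /eqP; rewrite eq_sym mulf_eq0 expf_eq0 sqrf_eq0 subr_eq0 (negbTE hzr) (negbTE hz0) andbF //.
have hD : (z - rho) * (1 - rho * z) != 0 by rewrite mulf_neq0 // subr_eq0.
split.
  move=> hn; have [hc hq] := unit_fwd _ _ hn; set a := complex.Re z in hc hq.
  have ca : cos (acos a) = a by apply: acosK; rewrite in_itv /= hc.
  have Key : z * sigma_den rho (acos a) = (z - rho) * (1 - rho * z).
    rewrite /sigma_den ca.
    have -> : z * (1 - 2 * rho * a%:C + rho ^+ 2) = z + rho ^+ 2 * z - rho * (2 * a%:C * z) by ring.
    by rewrite -hq; ring.
  have hden : sigma_den rho (acos a) != 0.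
    by move: hD; rewrite -Key mulf_eq0 negb_or => /andP[].
  exists (acos a); split => //.
  - by apply: (lt_le_trans _ (acos_ge0 hc)); rewrite oppr_lt0 pi_gt0.
  - exact: acos_lepi.
  - rewrite /lambda_of /sigma -Key; field; by rewrite hz0 hden.
case=> th [_ _ hden heq].
move: heq; rewrite /lambda_of /sigma => /eqP; rewrite eqr_div // => /eqP heq.
have heq2 : (1 - rho ^+ 2) * (z * sigma_den rho th) = (1 - rho ^+ 2) * ((z - rho) * (1 - rho * z)).
  by rewrite mulrA (mulrC _ z) heq mulrC.
move: (mulfI h1r heq2); rewrite /sigma_den => heq3.
have hq : rho * (z ^+ 2 - 2 * (cos th)%:C * z + 1) = 0.
  have -> : rho * (z ^+ 2 - 2 * (cos th)%:C * z + 1) = z * (1 - 2 * rho * (cos th)%:C + rho ^+ 2) - (z - rho) * (1 - rho * z) by ring.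
  by rewrite heq3 subrr.
have [hr|hr0] := eqVneq rho 0.
  subst rho; move: Id'; rewrite !mul0r subr0 expr1n subr0 -exprD => /esym h.
  have : `|z| ^+ (2 * n + 2) = 1 by rewrite -normrX h normr1.
  by move/eqP; rewrite pexpr_eq1 ?addn2 // => /eqP.
move/eqP: hq; rewrite mulf_eq0 (negbTE hr0) /= => /eqP hq.
apply: (unit_of_quad _ _ (cos th)) => //.
by have := cos_max th; rewrite ler_norml.
Qed.
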